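(* Let $\tau:\mathcal{X}\to\mathcal{X}$ be a continuous map on a compact metric space $(\mathcal{X},d)$ and let $x_*\in\mathcal{X}$. Then $\tau$ is mixing with fixed point $x_*$ (i.e. $\lim_{n\to\infty}\tau^n(x)=x_*$ for all $x\in\mathcal{X}$) if and only if there exists a generalised Lyapunov function for $\tau$ around $x_*$.
   Context: $\tau^n$ is the $n$-fold composition of $\tau$. A continuous map $S:\mathcal{X}\to\mathbb{R}$ is a generalised Lyapunov function for $\tau$ around $x_*\in\mathcal{X}$ if for every $x\in\mathcal{X}$ the sequence $S(\tau^n(x))$ converges, and $\lim_{n\to\infty}S(\tau^n(x))\neq S(x)$ for all $x\neq x_*$. *)

(* Defs.v *)
From HB Require Import structures.
From mathcomp Require Import all_boot all_order all_algebra.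
From mathcomp Require Import all_classical all_reals all_analysis.
Set Implicit Arguments. Unset Strict Implicit. Unset Printing Implicit Defensive.
Import Order.TTheory GRing.Theory Num.Theory.
Import numFieldNormedType.Exports.
Local Open Scope classical_set_scope.
Local Open Scope ring_scope.

Definition mixing_with_fixed_point {R : realType} {X : metricType R}
  (tau : X -> X) (xs : X) : Prop :=
  forall x : X, (fun n : nat => iter n tau x) @ \oo --> xs.

Definition generalised_lyapunov {R : realType} {X : metricType R}
  (tau : X -> X) (xs : X) (S : X -> R) : Prop :=
  continuous S /\
  (forall x : X, cvg ((fun n : nat => S (iter n tau x)) @ \oo)) /\
  (forall x : X, x <> xs -> lim ((fun n : nat => S (iter n tau x)) @ \oo) <> S x).

(* Main.v *)
Require Import Defs.
From HB Require Import structures.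
From mathcomp Require Import all_boot all_order all_algebra.
From mathcomp Require Import all_classical all_reals all_analysis.
Import numFieldNormedType.Exports.
Local Open Scope classical_set_scope.
Local Open Scope ring_scope.
From mathcomp Require Import lra.
Import Order.TTheory GRing.Theory Num.Theory.

Lemma cluster_map {T U : topologicalType} (F : set_system nat) (u : nat -> T)
  (f : T -> U) (y : T) :
  {for y, continuous f} -> cluster (u @ F) y -> cluster ((f \o u) @ F) (f y).
Proof.
move=> cf cy A B FA nB.
have nB' : nbhs y (f @^-1` B) by apply: cf.
have [z [Az Bz]] := cy (f @^-1` A) _ FA nB'.
by exists (f z).
Qed.

Arguments cluster_map {T U F u f y}.

Lemma cluster_shift {T : topologicalType} (u : nat -> T) (y : T) :
  cluster ((fun n => u n.+1) @ \oo) y -> cluster (u @ \oo) y.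
Proof.
apply: cvg_cluster => A [N _ HN] /=; exists N => // n /= Nn.
by apply: HN => /=; apply: leqW.
Qed.

Theorem mainTheorem7 (R : realType) (X : metricType R)
  (tau : X -> X) (xs : X) :
  compact [set: X] -> continuous tau ->
  (mixing_with_fixed_point tau xs <->
   exists S : X -> R, generalised_lyapunov tau xs S).
Proof.
move=> cX ctau; split.
- move=> mix; exists (fun x => mdist xs x).
  have lim0 : forall x, (fun n => mdist xs (iter n tau x)) @ \oo --> (0:R).
    move=> x.
apply/cvgrPdist_lt => e e0.
    have H := (metricType_numDomainType.cvgrPdist_lt (fun n => iter n tau x) xs).1 (mix x) e e0.
    apply: filterS (H _) => n /=.
    by rewrite sub0r normrN ger0_norm // mdist_ge0.
  split; [|split].
  + move=> x.
apply/cvgrPdist_lt => e e0.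
    apply: filterS (nbhsx_ballx x e e0) => t; rewrite ballEmdist /= => xt.
    have h1 := metric_triangle xs x t.
    have h2 := metric_triangle xs t x.
    have h3 := metric_sym x t.
    rewrite ltr_norml; apply/andP; split.
    * rewrite -h3 in h2; lra.
    * rewrite -h3 in h2; lra.
  + by move=> x; apply/cvg_ex; exists 0; apply: lim0.
  + move=> x xnx.
    rewrite (cvg_lim (@Rhausdorff R) (lim0 x)).
    move=> /esym/eqP; rewrite eq_le (mdist_ge0 xs x) andbT leNgt mdist_gt0.
    by move/negP; apply; apply/eqP => e; apply: xnx.
- move=> [S [cS [cvS lyap]]] x.
  pose u := fun n => iter n tau x.
  pose L := lim ((fun n => S (u n)) @ \oo).
  have HL : (fun n => S (u n)) @ \oo --> L := cvS x.
  have key : forall y, cluster (u @ \oo) y -> y = xs.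
    move=> y cy.
    have cm : forall m, cluster (u @ \oo) (iter m tau y).
      elim=> [|m IH] //=.
      apply: cluster_shift.
      exact: (cluster_map (ctau _) IH).
    have SL : forall m, S (iter m tau y) = L.
      move=> m; have c := cluster_map (cS _) (cm m).
      have := cvg_cluster HL c.
      by move=> /(@Rhausdorff R) ->.
    apply: contrapT => yn; apply: (lyap y yn).
    have -> : (fun n => S (iter n tau y)) = fun _ => L.
      by apply: funext => n; rewrite SL.
    by rewrite lim_cst ?(SL 0%N) //; apply: Rhausdorff.
  apply: (@compact_cluster_set1 _ xs _ setT).
  + exact: metric_hausdorff.
  + exact: cX.
  + exact: filterT.
  + exact: filterT.
  + rewrite predeqE => y; split; first exact: key.
    move=> ->.
    have [z [_ cz]] := cX (u @ \oo) _ filterT.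
    by rewrite -(key z cz).
Qed.
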